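(* Let $x,y\in\mathbb{B}^2\setminus\{0\}$ with $|x|=|y|$. (1) If $|x+y|\le \frac{4|x|^2}{1+|x|^2}$, then $$\tilde\tau_{\mathbb{B}^2}(x,y)=\log\Big(1+\sqrt{\tfrac{2|x|\,|x-y|}{1-|x|^2}}\Big).$$ (2) If $|x+y|> \frac{4|x|^2}{1+|x|^2}$, then $$\tilde\tau_{\mathbb{B}^2}(x,y)=\log\Big(1+\tfrac{|x-y|}{\sqrt{1+|x|^2-|x+y|}}\Big).$$
   Context: $\mathbb{B}^n=\{z\in\mathbb{R}^n:|z|<1\}$ is the open unit ball. For a proper subdomain $D\subsetneq\mathbb{R}^n$ with nonempty boundary $\partial D$ and $x,y\in D$, the scale invariant Cassinian metric is $$\tilde\tau_D(x,y)=\log\Big(1+\sup_{p\in\partial D}\frac{|x-y|}{\sqrt{|x-p|\,|y-p|}}\Big).$$ *)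

(* Defs.v *)
From Stdlib Require Import Reals Lra Classical ClassicalEpsilon.
Open Scope R_scope.

Definition pt := (R * R)%type.

Definition padd (x y : pt) : pt := (fst x + fst y, snd x + snd y).
Definition psub (x y : pt) : pt := (fst x - fst y, snd x - snd y).
Definition norm (x : pt) : R := sqrt (fst x * fst x + snd x * snd x).
Definition origin : pt := (0, 0).

Definition ball2 (z : pt) : Prop := norm z < 1.

Definition boundary (D : pt -> Prop) (p : pt) : Prop :=
  forall eps, 0 < eps ->
    (exists q, D q /\ norm (psub q p) < eps) /\
    (exists q, ~ D q /\ norm (psub q p) < eps).

(* Supremum of a set of reals (least upper bound), chosen classically;
   it is the genuine supremum whenever the set is nonempty and bounded above. *)
Definition supR (E : R -> Prop) : R :=
  epsilon (inhabits 0) (fun s => is_lub E s).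

Definition cass_set (D : pt -> Prop) (x y : pt) (t : R) : Prop :=
  exists p, boundary D p /\
    t = norm (psub x y) / sqrt (norm (psub x p) * norm (psub y p)).

Definition tilde_tau (D : pt -> Prop) (x y : pt) : R :=
  ln (1 + supR (cass_set D x y)).

(* Main.v *)
Require Import Defs.
From Stdlib Require Import Reals Lra Psatz Classical ClassicalEpsilon.
Open Scope R_scope.

Lemma parseval S1 S2 D1 D2 u v :
  (D1*D1+D2*D2)*(S1*u+S2*v)^2 + (S1*S1+S2*S2)*(D1*u+D2*v)^2 =
  ((S1*S1+S2*S2)*(D1*D1+D2*D2) - (S1*D1+S2*D2)^2)*(u*u+v*v)
  + 2*(S1*D1+S2*D2)*(S1*u+S2*v)*(D1*u+D2*v).
Proof. ring. Qed.

Lemma abs1 r2 s2 t2 sg dl F :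
  0 < r2 -> s2 + t2 = 4*r2 -> t2*sg^2 + s2*dl^2 = s2*t2 ->
  F = (1+r2-sg)^2 - dl^2 ->
  4*r2*s2*F - s2*t2*(1-r2)^2 = (4*r2*sg - s2*(1+r2))^2.
Proof.
  intros H0 H1 H2 HF. subst F.
  assert (t2 = 4*r2 - s2) by lra. subst t2.
  assert (E: s2*dl^2 = s2*(4*r2-s2) - (4*r2-s2)*sg^2) by lra.
  replace (4 * r2 * s2 * ((1 + r2 - sg) ^ 2 - dl ^ 2)) with
    (4 * r2 * s2 * (1 + r2 - sg) ^ 2 - 4*r2*(s2*dl^2)) by ring.
  rewrite E. ring.
Qed.

Lemma abs2 r2 s2 t2 sg dl F s :
  0 < r2 -> s2 + t2 = 4*r2 -> t2*sg^2 + s2*dl^2 = s2*t2 -> s*s = s2 ->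
  F = (1+r2-sg)^2 - dl^2 ->
  s2*(F - (1+r2-s)^2) = (sg - s)*(4*r2*sg - 2*s2*(1+r2) + 4*r2*s).
Proof.
  intros H0 H1 H2 Hs HF. subst F.
  assert (t2 = 4*r2 - s2) by lra. subst t2.
  assert (E: s2*dl^2 = s2*(4*r2-s2) - (4*r2-s2)*sg^2) by lra.
  replace (s2 * ((1 + r2 - sg) ^ 2 - dl ^ 2 - (1 + r2 - s) ^ 2)) with
    (s2 * ((1 + r2 - sg) ^ 2 - (1 + r2 - s) ^ 2) - s2*dl^2) by ring.
  rewrite E. subst s2. ring.
Qed.

Lemma bound1 r2 s2 t2 sg dl F :
  0 < r2 -> 0 <= s2 -> s2 + t2 = 4*r2 -> t2*sg^2 + s2*dl^2 = s2*t2 ->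
  sg^2 <= s2 -> dl^2 <= t2 ->
  F = (1+r2-sg)^2 - dl^2 ->
  t2*(1-r2)^2/(4*r2) <= F.
Proof.
  intros H0 Hs H1 H2 H3 H4 HF.
  destruct (Req_dec s2 0) as [Z|Z].
  - subst s2. assert (sg = 0) by nra. subst sg.
    assert (t2 = 4*r2) by lra. subst.
    replace (4 * r2 * (1 - r2) ^ 2 / (4 * r2)) with ((1-r2)^2) by (field; lra).
    nra.
  - pose proof (abs1 r2 s2 t2 sg dl F H0 H1 H2 HF).
    apply Rmult_le_reg_r with (4*r2*s2); [nra|].
    replace (t2 * (1 - r2) ^ 2 / (4 * r2) * (4 * r2 * s2)) with (s2*t2*(1-r2)^2) by (field; lra).
    pose proof (pow2_ge_0 (4*r2*sg - s2*(1+r2))). lra.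
Qed.

Lemma bound2 r2 s2 t2 sg dl F s :
  0 < r2 -> 0 <= s -> s2 + t2 = 4*r2 -> t2*sg^2 + s2*dl^2 = s2*t2 -> s*s = s2 ->
  sg^2 <= s2 -> s*(1+r2) > 4*r2 ->
  F = (1+r2-sg)^2 - dl^2 ->
  (1+r2-s)^2 <= F.
Proof.
  intros H0 Hs H1 H2 H3 H4 H5 HF.
  pose proof (abs2 r2 s2 t2 sg dl F s H0 H1 H2 H3 HF).
  assert (sg <= s) by nra.
  assert (4*r2*sg - 2*s2*(1+r2) + 4*r2*s < 0) by nra.
  assert (0 < s2) by nra.
  assert (0 <= s2*(F - (1+r2-s)^2)) by nra.
  nra.
Qed.

Lemma norm_ge0 z : 0 <= norm z.
Proof. unfold norm. apply sqrt_pos. Qed.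

Lemma norm_sq z : norm z * norm z = fst z * fst z + snd z * snd z.
Proof. unfold norm. apply sqrt_sqrt. nra. Qed.

Lemma norm_tri z w : norm (padd z w) <= norm z + norm w.
Proof.
  destruct z as [a b], w as [c d].
  pose proof (norm_sq (a,b)) as H1. pose proof (norm_sq (c,d)) as H2.
  pose proof (norm_sq (padd (a,b) (c,d))) as H3.
  pose proof (norm_ge0 (a,b)). pose proof (norm_ge0 (c,d)).
  pose proof (norm_ge0 (padd (a,b) (c,d))).
  simpl in *.
  set (A := norm (a,b)) in *. set (C := norm (c,d)) in *.
  set (S := norm (a+c,b+d)) in *.
  assert (a*c+b*d <= A*C).
  { destruct (Rle_dec (a*c+b*d) 0). nra.
    assert ((a*c+b*d)^2 <= (A*C)^2).
    { replace ((A*C)^2) with ((A*A)*(C*C)) by ring. rewrite H1, H2.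
      pose proof (pow2_ge_0 (a*d-b*c)). nra. }
    assert (0 <= A*C) by nra.
    destruct (Rle_dec (a*c+b*d) (A*C)); auto.
    assert (A*C < a*c+b*d) by lra.
    assert ((A*C)*(A*C) < (a*c+b*d)*(a*c+b*d)) by (apply Rmult_le_0_lt_compat; lra).
    nra. }
  nra.
Qed.

Lemma psub_sym z w : norm (psub z w) = norm (psub w z).
Proof. destruct z, w. unfold norm; simpl. f_equal. ring. Qed.

Definition scale (k : R) (z : pt) : pt := (k * fst z, k * snd z).

Lemma norm_scale k z : norm (scale k z) = Rabs k * norm z.
Proof.
  destruct z as [a b]. unfold norm, scale; simpl.
  replace (k*a*(k*a)+k*b*(k*b)) with ((k*k)*(a*a+b*b)) by ring.
  rewrite sqrt_mult by nra. f_equal. rewrite <- sqrt_Rsqr_abs. reflexivity.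
Qed.

Lemma bnd_norm p : boundary ball2 p -> norm p = 1.
Proof.
  intros H. destruct (Rtotal_order (norm p) 1) as [L|[E|G]]; auto.
  - destruct (H (1 - norm p)) as [_ [q [Hq Hd]]]; [lra|].
    exfalso. apply Hq. unfold ball2.
    pose proof (norm_tri (psub q p) p).
    replace (padd (psub q p) p) with q in H0 by (destruct q, p; unfold padd, psub; simpl; f_equal; ring).
    lra.
  - destruct (H (norm p - 1)) as [[q [Hq Hd]] _]; [lra|].
    exfalso. unfold ball2 in Hq.
    pose proof (norm_tri (psub p q) q).
    replace (padd (psub p q) q) with p in H0 by (destruct q, p; unfold padd, psub; simpl; f_equal; ring).
    rewrite psub_sym in H0. lra.
Qed.

Lemma norm_bnd p : norm p = 1 -> boundary ball2 p.
Proof.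
  intros H eps He.
  set (l := Rmin (eps/2) (1/2)).
  assert (0 < l) by (unfold l; apply Rmin_glb_lt; lra).
  assert (l <= eps/2) by apply Rmin_l.
  assert (l <= 1/2) by apply Rmin_r.
  split.
  - exists (scale (1 - l) p). split.
    + unfold ball2. rewrite norm_scale, H, Rabs_right by lra. lra.
    + replace (psub (scale (1-l) p) p) with (scale (-l) p) by
        (destruct p; unfold scale, psub; simpl; f_equal; ring).
      rewrite norm_scale, H, Rabs_left by lra. lra.
  - exists (scale (1 + l) p). split.
    + unfold ball2. rewrite norm_scale, H, Rabs_right by lra. lra.
    + replace (psub (scale (1+l) p) p) with (scale l p) by
        (destruct p; unfold scale, psub; simpl; f_equal; ring).
      rewrite norm_scale, H, Rabs_right by lra. lra.
Qed.

Lemma sup_eq E W : (forall z, E z -> z <= W) -> E W -> supR E = W.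
Proof.
  intros Hub HW.
  assert (Hl : is_lub E W).
  { split. intros z Hz. apply Hub; auto. intros b Hb. apply Hb; auto. }
  unfold supR.
  assert (exists s, is_lub E s) as Ex by (exists W; auto).
  pose proof (epsilon_spec (inhabits 0) (fun s => is_lub E s) Ex) as Hs.
  set (s := epsilon _ _) in *.
  destruct Hs as [Hs1 Hs2]. destruct Hl as [Hl1 Hl2].
  apply Rle_antisym; [apply Hs2; auto | apply Hl2; auto].
Qed.

Lemma pfacts a b c d u v r2 :
  a*a+b*b = r2 -> c*c+d*d = r2 -> u*u+v*v = 1 ->
  let sg := (a+c)*u+(b+d)*v in let dl := (a-c)*u+(b-d)*v in
  let s2 := (a+c)*(a+c)+(b+d)*(b+d) in let t2 := (a-c)*(a-c)+(b-d)*(b-d) in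
  norm (psub (a,b) (u,v)) * norm (psub (c,d) (u,v)) = sqrt ((1+r2-sg)^2 - dl^2) /\
  s2 + t2 = 4*r2 /\ t2*sg^2 + s2*dl^2 = s2*t2 /\ sg^2 <= s2 /\ dl^2 <= t2 /\
  0 <= (1+r2-sg)^2 - dl^2.
Proof.
  intros H1 H2 H3. cbv zeta.
  assert (E: (1+r2-((a+c)*u+(b+d)*v))^2 - ((a-c)*u+(b-d)*v)^2 = ((a-u)*(a-u)+(b-v)*(b-v))*((c-u)*(c-u)+(d-v)*(d-v))).
  { replace ((a-u)*(a-u)+(b-v)*(b-v)) with (1+r2-2*(a*u+b*v)) by (rewrite <- H1, <- H3; ring).
    replace ((c-u)*(c-u)+(d-v)*(d-v)) with (1+r2-2*(c*u+d*v)) by (rewrite <- H2, <- H3; ring).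
    ring. }
  split; [|split; [|split; [|split; [|split]]]].
  - unfold norm, psub; cbn [fst snd]. rewrite <- sqrt_mult. f_equal. rewrite E. ring. all: apply Rplus_le_le_0_compat; apply Rle_0_sqr.
  - nra.
  - rewrite (parseval (a+c) (b+d) (a-c) (b-d) u v).
    replace ((a + c) * (a - c) + (b + d) * (b - d)) with 0 by nra.
    rewrite H3. ring.
  - pose proof (pow2_ge_0 ((a+c)*v - (b+d)*u)).
    rewrite <- (Rmult_1_r ((a+c)*(a+c)+(b+d)*(b+d))), <- H3. nra.
  - pose proof (pow2_ge_0 ((a-c)*v - (b-d)*u)).
    rewrite <- (Rmult_1_r ((a-c)*(a-c)+(b-d)*(b-d))), <- H3. nra.
  - rewrite E. apply Rmult_le_pos; apply Rplus_le_le_0_compat; apply Rle_0_sqr.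
Qed.

Lemma ratio_le t L F : 0 < L -> L*L <= F -> 0 <= t -> t / sqrt (sqrt F) <= t / sqrt L.
Proof.
  intros HL HF Ht.
  assert (L <= sqrt F) by (rewrite <- (sqrt_square L) by lra; apply sqrt_le_1_alt; auto).
  assert (sqrt L <= sqrt (sqrt F)) by (apply sqrt_le_1_alt; auto).
  assert (0 < sqrt L) by (apply sqrt_lt_R0; auto).
  unfold Rdiv. apply Rmult_le_compat_l; auto. apply Rinv_le_contravar; auto.
Qed.

Lemma ratio_eq t L F : 0 <= L -> F = L*L -> t / sqrt (sqrt F) = t / sqrt L.
Proof. intros HL HF. subst. rewrite sqrt_square; auto. Qed.


Lemma solveF A B F : A <> 0 -> A*F - B = 0^2 -> F = B / A.
Proof. intros HA H. field_simplify_eq; auto. lra. Qed.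

Theorem lemma3p2 (x y : pt) :
  ball2 x -> ball2 y -> x <> origin -> y <> origin -> norm x = norm y ->
  (norm (padd x y) <= 4 * norm x ^ 2 / (1 + norm x ^ 2) ->
     tilde_tau ball2 x y =
     ln (1 + sqrt (2 * norm x * norm (psub x y) / (1 - norm x ^ 2)))) /\
  (norm (padd x y) > 4 * norm x ^ 2 / (1 + norm x ^ 2) ->
     tilde_tau ball2 x y =
     ln (1 + norm (psub x y) / sqrt (1 + norm x ^ 2 - norm (padd x y)))).
Proof.
  intros Hx Hy Hx0 Hy0 Hr.
  destruct x as [a b], y as [c d].
  pose proof (norm_sq (a,b)) as Ha. pose proof (norm_sq (c,d)) as Hc.
  cbn [fst snd] in Ha, Hc.
  pose proof (norm_ge0 (a,b)) as Ha0.
  pose proof (norm_sq (padd (a,b) (c,d))) as Hs. pose proof (norm_ge0 (padd (a,b) (c,d))) as Hs0.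
  pose proof (norm_sq (psub (a,b) (c,d))) as Ht. pose proof (norm_ge0 (psub (a,b) (c,d))) as Ht0.
  unfold ball2 in Hx.
  rewrite <- Hr in Hc.
  set (r := norm (a,b)) in *.
  set (s := norm (padd (a,b) (c,d))) in *.
  set (t := norm (psub (a,b) (c,d))) in *.
  unfold padd, psub in Hs, Ht; cbn [fst snd] in Hs, Ht.
  assert (Er: norm (a,b) = r) by reflexivity.
  assert (Es: norm (padd (a,b) (c,d)) = s) by reflexivity.
  assert (Et: norm (psub (a,b) (c,d)) = t) by reflexivity.
  clearbody r s t.
  assert (Hr0 : 0 < r).
  { destruct (Rle_lt_or_eq_dec 0 r Ha0) as [H|H]; auto.
    exfalso. apply Hx0. assert (a = 0) by nra. assert (b = 0) by nra. subst. reflexivity. }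
  replace (r^2) with (r*r) by ring.
  assert (Hac : a*a+b*b = r*r) by lra.
  assert (Hcc : c*c+d*d = r*r) by lra.
  assert (Hst : s*s + t*t = 4*(r*r)) by nra.
  assert (Hcirc : forall u v, boundary ball2 (u,v) -> u*u+v*v = 1).
  { intros u v Hb. apply bnd_norm in Hb. pose proof (norm_sq (u,v)) as Q.
    rewrite Hb in Q. cbn [fst snd] in Q. lra. }
  split.
  - intro Hc1.
    assert (Hc1' : s*(1+r*r) <= 4*(r*r)).
    { replace (4*(r*r)) with (4*(r*r)/(1+r*r)*(1+r*r)) by (field; nra).
      apply Rmult_le_compat_r; nra. }
    assert (Ht1 : 0 < t).
    { destruct (Rle_lt_or_eq_dec 0 t Ht0) as [H|H]; auto. exfalso.
      subst t. assert (s*s = 4*(r*r)) by nra. assert (s = 2*r).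
      { assert (E: (s-2*r)*(s+2*r) = 0) by lra. apply Rmult_integral in E. lra. }
      subst s.
      assert (0 < r*(1-r)^2) by (apply Rmult_lt_0_compat; [lra| apply pow_lt; lra]).
      nra. }
    set (L := t*(1-r*r)/(2*r)).
    assert (HL : 0 < L) by (unfold L; apply Rdiv_lt_0_compat; [apply Rmult_lt_0_compat; nra | lra]).
    assert (HLL : L*L = t*t*(1-r*r)^2/(4*(r*r))) by (unfold L; field; lra).
    assert (HW : t / sqrt L = sqrt (2 * r * t / (1 - r*r))).
    { rewrite <- (sqrt_square t) at 1 by lra. rewrite <- sqrt_div_alt by auto.
      f_equal. unfold L. field. repeat split; nra. }
    unfold tilde_tau. rewrite <- HW. f_equal. f_equal. apply sup_eq.
    + intros z [[u v] [Hp Hz]]. apply Hcirc in Hp.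
      destruct (pfacts a b c d u v (r*r) Hac Hcc Hp) as [HF [H1 [H2 [H3 [H4 H5]]]]].
      rewrite Hz, HF, Et. apply ratio_le; auto; try lra.
      rewrite HLL, Ht.
      apply (bound1 (r*r) ((a+c)*(a+c)+(b+d)*(b+d)) _ ((a+c)*u+(b+d)*v) ((a-c)*u+(b-d)*v)); auto; nra.
    + destruct (Req_dec s 0) as [Z|Z].
      * assert (E0 : 0 = (a+c)*(a+c)+(b+d)*(b+d)) by (rewrite <- Hs, Z; ring).
        pose proof (Rle_0_sqr (a+c)). pose proof (Rle_0_sqr (b+d)). unfold Rsqr in *.
        assert (E1' : (a+c)*(a+c) = 0) by lra. assert (E2' : (b+d)*(b+d) = 0) by lra.
        apply Rmult_integral in E1', E2'.
        assert (E1 : a + c = 0) by (destruct E1'; lra). assert (E2 : b + d = 0) by (destruct E2'; lra).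
        set (u := a/r). set (v := b/r).
        assert (Huv : u*u+v*v = 1).
        { unfold u, v. replace (a/r*(a/r)+b/r*(b/r)) with ((a*a+b*b)/(r*r)) by (field; lra).
          rewrite Hac. field; lra. }
        exists (u,v). split.
        { apply norm_bnd. unfold norm; cbn [fst snd]. rewrite Huv. apply sqrt_1. }
        destruct (pfacts a b c d u v (r*r) Hac Hcc Huv) as [HF _].
        rewrite HF, Et. symmetry. apply ratio_eq; [lra|].
        assert (Hsg : (a+c)*u+(b+d)*v = 0) by (rewrite E1, E2; ring).
        assert (Hdl : (a-c)*u+(b-d)*v = 2*r).
        { replace c with (-a) by lra. replace d with (-b) by lra. unfold u, v.
          replace ((a - - a) * (a / r) + (b - - b) * (b / r)) with (2*(a*a+b*b)/r) by (field; lra).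
          rewrite Hac. field; lra. }
        rewrite Hsg, Hdl, HLL.
        assert (Htt : t*t = 4*(r*r)) by (subst s; lra).
        rewrite Htt. field. lra.
      * assert (Hs1 : 0 < s) by lra.
        set (us := (1+r*r)*s/(4*(r*r))).
        assert (Hus0 : 0 <= us) by (unfold us; apply Rmult_le_pos; [nra| left; apply Rinv_0_lt_compat; nra]).
        assert (Hus1 : us <= 1).
        { unfold us. replace ((1+r*r)*s/(4*(r*r))) with (s*(1+r*r)/(4*(r*r))) by (field; lra).
          apply Rmult_le_reg_r with (4*(r*r)); [nra|].
          replace (s*(1+r*r)/(4*(r*r))*(4*(r*r))) with (s*(1+r*r)) by (field; lra). lra. }
        set (w := sqrt (1 - us*us)).
        assert (Hw : w*w = 1 - us*us) by (unfold w; apply sqrt_sqrt; nra).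
        set (u := (us*(a+c) - w*(b+d))/s). set (v := (us*(b+d) + w*(a+c))/s).
        assert (Huv : u*u+v*v = 1).
        { unfold u, v.
          replace ((us*(a+c) - w*(b+d))/s*((us*(a+c) - w*(b+d))/s) + (us*(b+d) + w*(a+c))/s*((us*(b+d) + w*(a+c))/s))
            with ((us*us+w*w)*((a+c)*(a+c)+(b+d)*(b+d))/(s*s)) by (field; lra).
          rewrite Hw, <- Hs. field; lra. }
        exists (u,v). split.
        { apply norm_bnd. unfold norm; cbn [fst snd]. rewrite Huv. apply sqrt_1. }
        destruct (pfacts a b c d u v (r*r) Hac Hcc Huv) as [HF [H1 [H2 _]]].
        rewrite HF, Et. symmetry. apply ratio_eq; [lra|].
        assert (Hsg : (a+c)*u+(b+d)*v = us*s).
        { unfold u, v.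
          replace ((a+c)*((us*(a+c) - w*(b+d))/s)+(b+d)*((us*(b+d) + w*(a+c))/s))
            with (us*((a+c)*(a+c)+(b+d)*(b+d))/s) by (field; lra).
          rewrite <- Hs. field; lra. }
        pose proof (abs1 (r*r) _ _ _ _ _ ltac:(nra) H1 H2 eq_refl) as K.
        rewrite Hsg, <- Hs, <- Ht in K.
        assert (RHS0 : 4*(r*r)*(us*s) - s*s*(1+r*r) = 0) by (unfold us; field; lra).
        rewrite RHS0 in K. rewrite HLL, Hsg.
        assert (NZ : 4*(r*r)*(s*s) <> 0) by (apply Rgt_not_eq; repeat apply Rmult_lt_0_compat; lra).
        rewrite (solveF _ _ _ NZ K). field. split; lra.
  - intro Hc2.
    assert (Hc2' : s*(1+r*r) > 4*(r*r)).
    { replace (4*(r*r)) with (4*(r*r)/(1+r*r)*(1+r*r)) by (field; nra).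
      apply Rmult_lt_compat_r; nra. }
    assert (Hs1 : 0 < s) by nra.
    assert (Hs2 : s <= 2*r) by nra.
    set (L := 1 + r*r - s).
    assert (HL : 0 < L) by (unfold L; pose proof (pow2_ge_0 (1-r)); nra).
    unfold tilde_tau. f_equal. f_equal. apply sup_eq.
    + intros z [[u v] [Hp Hz]]. apply Hcirc in Hp.
      destruct (pfacts a b c d u v (r*r) Hac Hcc Hp) as [HF [H1 [H2 [H3 [H4 H5]]]]].
      rewrite Hz, HF, Et. apply ratio_le; auto; try lra.
      unfold L. replace ((1+r*r-s)*(1+r*r-s)) with ((1+r*r-s)^2) by ring.
      apply (bound2 (r*r) ((a+c)*(a+c)+(b+d)*(b+d)) ((a-c)*(a-c)+(b-d)*(b-d)) ((a+c)*u+(b+d)*v) ((a-c)*u+(b-d)*v) _ s); auto; nra.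
    + set (u := (a+c)/s). set (v := (b+d)/s).
      assert (Huv : u*u+v*v = 1).
      { unfold u, v. replace ((a+c)/s*((a+c)/s)+(b+d)/s*((b+d)/s)) with (((a+c)*(a+c)+(b+d)*(b+d))/(s*s)) by (field; lra).
        rewrite <- Hs. field; lra. }
      exists (u,v). split.
      { apply norm_bnd. unfold norm; cbn [fst snd]. rewrite Huv. apply sqrt_1. }
      destruct (pfacts a b c d u v (r*r) Hac Hcc Huv) as [HF [H1 [H2 _]]].
      rewrite HF, Et. symmetry. apply ratio_eq; [lra|].
      assert (Hsg : (a+c)*u+(b+d)*v = s).
      { unfold u, v.
        replace ((a+c)*((a+c)/s)+(b+d)*((b+d)/s)) with (((a+c)*(a+c)+(b+d)*(b+d))/s) by (field; lra).
        rewrite <- Hs. field; lra. }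
      pose proof (abs2 (r*r) _ _ _ _ _ s ltac:(nra) H1 H2 (eq_sym (eq_sym Hs)) eq_refl) as K.
      rewrite Hsg, Rminus_diag, Rmult_0_l, <- Hs in K.
      apply Rmult_integral in K. destruct K as [K|K]; [nra|].
      rewrite Hsg. unfold L. nra.
Qed.
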